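(* Let $p_k$ be as defined in the context. In the Laurent polynomial ring $\mathbb Z[a^{\pm1},q^{\pm1}]$, for each nonzero integer $i$ set $\ell=|i|-1$ and $k=|i-\tfrac12|-\tfrac12$ (so $k=\ell=i-1$ if $i\ge1$, and $k=-i$, $\ell=-i-1$ if $i\le-1$), and define for $m\in\mathbb Z$ $$x_i(m)=\begin{cases}p_{m-k}\big(a^{-1}q^{-m-k},a^{-1}q^{-m-k+1},\dots,a^{-1}q^{-m+\ell}\big)&\text{if } m>k,\\ 0&\text{if } -\ell\le m\le k,\\ p_{-m-\ell}\big(aq^{m-\ell},aq^{m-\ell+1},\dots,aq^{m+k}\big)&\text{if } m<-\ell.\end{cases}$$ Then for all integers $m\ne n$, $1-aq^{m+n}$ divides $x_i(m)-x_i(n)$ in $\mathbb Z[a^{\pm1},q^{\pm1}]$.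
   Context: For integers $k\ge0$ and variables $\lambda_1,\dots,\lambda_r$, $p_k(\lambda_1,\dots,\lambda_r)=(1-\lambda_1)\cdots(1-\lambda_r)\sum_{\alpha\in\mathbb Z_{\ge0}^r,\,0\le|\alpha|<k}\lambda^\alpha$, with $\lambda^\alpha=\prod\lambda_j^{\alpha_j}$ and $|\alpha|=\sum\alpha_j$. (In the paper these are the fixed-point restrictions of module generators of $K^*_T(\Omega SU(2))$, with $K^0_T=\mathbb Z[a^{\pm1},q^{\pm1}]$ and the fixed points indexed by $\mathbb Z$; the stated divisibility is the GKM condition along the edge between fixed points $m$ and $n$.) *)

(* Defs.v *)
From HB Require Import structures.
From mathcomp Require Import all_boot all_order all_algebra fraction.
Set Implicit Arguments. Unset Strict Implicit. Unset Printing Implicit Defensive.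
Import Order.TTheory GRing.Theory Num.Theory.
Local Open Scope ring_scope.

(* The Laurent polynomial ring Z[a^{+-1}, q^{+-1}] is realised as the subring
   of the fraction field Frac(Z[a][q]) consisting of elements P / (a^N q^M). *)
Definition Frac := {fraction {poly {poly int}}}.
Definition tof (x : {poly {poly int}}) : Frac := FracField.tofrac x.

Definition va : Frac := tof (('X : {poly int})%:P).
Definition vq : Frac := tof 'X.

Definition laurent (x : Frac) : Prop :=
  exists (P : {poly {poly int}}) (N M : nat), x = tof P / (va ^+ N * vq ^+ M).

(* p_k(lambda_1..lambda_r) = prod (1 - lambda_j) * sum_{alpha in N^r, |alpha| < k} lambda^alpha.
   Every alpha with |alpha| < k has all entries < k, so alpha ranges over
   functions 'I_r -> 'I_k. *)
Definition pk (k r : nat) (lam : 'I_r -> Frac) : Frac :=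
  (\prod_(j < r) (1 - lam j)) *
  \sum_(alpha : {ffun 'I_r -> 'I_k} | (\sum_(j < r) (alpha j : nat) < k)%N)
     \prod_(j < r) lam j ^+ alpha j.

Definition kI (i : int) : int := if 0 < i then i - 1 else - i.
Definition lI (i : int) : int := `|i| - 1.
Definition nvar (i : int) : nat := absz (kI i + lI i + 1).

Definition xi (i m : int) : Frac :=
  if kI i < m then
    pk (absz (m - kI i)) (fun j : 'I_(nvar i) => va^-1 * vq ^ (- m - kI i + (j : nat)%:Z))
  else if m < - lI i then
    pk (absz (- m - lI i)) (fun j : 'I_(nvar i) => va * vq ^ (m - lI i + (j : nat)%:Z))
  else 0.

(* Main.v *)
Require Import Defs.
From HB Require Import structures.
From mathcomp Require Import all_boot all_order all_algebra fraction.
From mathcomp Require Import ring zify.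
Import Order.TTheory GRing.Theory Num.Theory.
Local Open Scope ring_scope.

Module P1.
Set Implicit Arguments. Unset Strict Implicit.

Section Sym.
Variable F : fieldType.

Fixpoint Tl (s : seq F) (K : nat) {struct s} : F :=
  if s is x :: s' then \sum_(a < K) x ^+ a * Tl s' (K - a) else (0 < K)%:R.

Lemma Tl0 s : Tl s 0 = 0.
Proof. by case: s => [|x s] /=; rewrite ?big_ord0. Qed.

Lemma Tl1 s : Tl s 1 = 1.
Proof. elim: s => [|x s IH] //=. by rewrite big_ord1 expr0 mul1r subn0 IH. Qed.

Definition H (s : seq F) d := Tl s d.+1 - Tl s d.

Lemma H0 s : H s 0 = 1.
Proof. by rewrite /H Tl1 Tl0 subr0. Qed.

Lemma Hnil d : H [::] d = (d == 0)%:R.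
Proof. by case: d => [|d]; rewrite /H /= ?subr0 ?subrr. Qed.

Lemma HS x s d : H (x :: s) d = \sum_(a < d.+1) x ^+ a * H s (d - a).
Proof.
rewrite /H /= big_ord_recr /= subSnn Tl1 [RHS]big_ord_recr /= subnn Tl1 Tl0 subr0.
rewrite addrAC -sumrB; congr (_ + _); apply: eq_bigr => a _.
by rewrite -mulrBr subSn // ltnW.
Qed.

Lemma Hhom c s d : H (map (fun x => c * x) s) d = c ^+ d * H s d.
Proof.
elim: s d => [|x s IH] d /=.
  by rewrite !Hnil; case: d => [|d]; rewrite ?expr0 ?mul1r ?mulr0.
rewrite !HS mulr_sumr; apply: eq_bigr => a _.
by rewrite IH exprMn mulrACA -exprD subnKC // -ltnS.
Qed.

Definition geo (z : F) N r := mkseq (fun j => z ^+ (N + j)) r.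
Definition Pl (z : F) N r := \prod_(j < r) (1 - z ^+ (N + j)).

Lemma geoE z N r : geo z N r = map (fun x => z ^+ N * x) (geo z 0 r).
Proof. by rewrite /geo /mkseq -map_comp; apply: eq_map => j /=; rewrite add0n exprD. Qed.

Lemma geoSl z N r : geo z N r.+1 = z ^+ N :: geo z N.+1 r.
Proof.
rewrite /geo /mkseq /= addn0; congr (_ :: _).
rewrite -[in LHS](addn0 1%N) iotaDl -map_comp; apply: eq_map => j /=.
by rewrite addnCA add1n.
Qed.

Lemma Hgeo z N r M : H (geo z N r) M = z ^+ (N * M) * H (geo z 0 r) M.
Proof. by rewrite geoE Hhom exprM. Qed.

Definition E (z : F) r M := H (geo z 0 r) M.

Lemma ErecS z r M : E z r.+1 M.+1 = z ^+ M.+1 * E z r M.+1 + E z r.+1 M.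
Proof.
rewrite /E geoSl expr0 !HS big_ord_recl /= subn0 expr1n mul1r.
rewrite [H (geo z 1 r) _]Hgeo mul1n; congr (_ + _).
by apply: eq_bigr => a _; rewrite !expr1n !mul1r /bump add1n subSS.
Qed.

Lemma E0 z r : E z r 0 = 1.
Proof. exact: H0. Qed.

Lemma E_nil z M : E z 0 M.+1 = 0.
Proof. by rewrite /E /geo /= Hnil. Qed.

Lemma E_closed z r M : E z r.+1 M * Pl z 1 r = Pl z M.+1 r.
Proof.
elim: r M => [|r IHr] M.
  rewrite /Pl !big_ord0 mulr1.
  elim: M => [|M IH]; first by rewrite E0.
  by rewrite ErecS E_nil mulr0 add0r.
elim: M => [|M IH]; first by rewrite E0 mul1r.
rewrite ErecS mulrDl IH.
rewrite {1}/Pl big_ord_recr /= mulrA -(mulrA (z ^+ M.+1)) -/(Pl z 1 r) IHr /Pl.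
rewrite [\prod_(j < r.+1) (1 - z ^+ (M.+1 + j))]big_ord_recl /= addn0.
rewrite [\prod_(j < r.+1) (1 - z ^+ (M.+2 + j))]big_ord_recr /=.
have -> : \prod_(i < r) (1 - z ^+ (M.+1 + lift ord0 i)) = \prod_(j < r) (1 - z ^+ (M.+2 + j)).
  by apply: eq_bigr => j _; rewrite lift0 !addnS !addSn.
set X := \prod_(j < r) _.
have -> : z ^+ (M.+2 + r) = z ^+ M.+1 * z ^+ (1 + r) by rewrite -exprD addSnnS addnA.
ring.
Qed.

Variable z : F.
Hypothesis hz : forall j, 1 - z ^+ j.+1 != 0.

Lemma Pl1_neq0 r : Pl z 1 r != 0.
Proof. by apply/prodf_neq0 => j _; rewrite add1n hz. Qed.

Lemma Estar r M N : E z r.+1 M * Pl z N.+1 r = E z r.+1 N * Pl z M.+1 r.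
Proof.
apply: (mulIf (Pl1_neq0 r)).
by rewrite mulrAC E_closed [RHS]mulrAC E_closed mulrC.
Qed.

Variable r' : nat.
Definition ff M N := Pl z N r'.+1 * Tl (geo z N r'.+1) M.

Lemma ffS M N : ff M.+1 N - ff M N = Pl z N r'.+1 * z ^+ (N * M) * E z r'.+1 M.
Proof. by rewrite /ff -mulrBr -/(H _ _) Hgeo mulrA. Qed.

Definition DD M N := z ^+ (N * M) * (E z r'.+1 M * Pl z N.+1 r') *
   (z ^+ M - z ^+ (M + N + r'.+1) - 1 + z ^+ N).

Lemma DD_sym M N : DD M N = DD N M.
Proof. rewrite /DD Estar [(N * M)%N]mulnC [(M + N)%N]addnC; congr (_ * _); ring. Qed.

Lemma ffD M N : ff M.+1 N.+1 - ff M N.+1 - (ff M.+1 N - ff M N) = DD M N.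
Proof.
rewrite !ffS /DD.
rewrite {1}/Pl big_ord_recr /= {1}/Pl big_ord_recl /= addn0.
have -> : \prod_(i < r') (1 - z ^+ (N + lift ord0 i)) = Pl z N.+1 r'.
  by apply: eq_bigr => j _; rewrite lift0 addnS.
rewrite -/(Pl z N.+1 r').
have -> : z ^+ (N.+1 * M) = z ^+ (N * M) * z ^+ M by rewrite -exprD; congr (_ ^+ _); lia.
have -> : z ^+ (M + N + r'.+1) = z ^+ M * z ^+ (N.+1 + r') by rewrite -exprD; congr (_ ^+ _); lia.
ring.
Qed.

Lemma ff0l N : ff 0 N = 0.
Proof. by rewrite /ff Tl0 mulr0. Qed.

Lemma ff0r M : ff M 0 = 0.
Proof. by rewrite /ff /Pl big_ord_recl /= expr0 subrr mul0r mul0r. Qed.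

Lemma ff_sym M N : ff M N = ff N M.
Proof.
move: {2}(M + N)%N (leqnn (M + N)) => s.
elim: s M N => [|s IH] [|M] [|N] //= hs; rewrite ?ff0l ?ff0r //.
have e : ff M.+1 N.+1 = DD M N + ff M N.+1 + ff M.+1 N - ff M N.
  rewrite -ffD; ring.
have e' : ff N.+1 M.+1 = DD N M + ff N M.+1 + ff N.+1 M - ff N M.
  rewrite -ffD; ring.
rewrite e e' DD_sym (IH M N.+1) ?(IH M.+1 N) ?(IH M N) //; try lia.
ring.
Qed.

End Sym.

End P1.
Import P1.

Module P2.
Set Implicit Arguments. Unset Strict Implicit.

Section FF.
Variable F : fieldType.

Definition join r C (p : 'I_C * {ffun 'I_r -> 'I_C}) : {ffun 'I_r.+1 -> 'I_C} :=
  [ffun j => if unlift ord0 j is Some j' then p.2 j' else p.1].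
Definition splt r C (a : {ffun 'I_r.+1 -> 'I_C}) : 'I_C * {ffun 'I_r -> 'I_C} :=
  (a ord0, [ffun j => a (lift ord0 j)]).

Lemma join_bij r C : bijective (@join r C).
Proof.
exists (@splt r C).
  case=> a b; rewrite /splt /join /= !ffunE unlift_none; congr (_, _).
  by apply/ffunP => j; rewrite !ffunE liftK.
move=> a; apply/ffunP => j; rewrite /join /splt !ffunE.
by case: unliftP => [j'|] -> //=; rewrite ffunE.
Qed.

Lemma join0 r C p : @join r C p ord0 = p.1.
Proof. by rewrite ffunE unlift_none. Qed.
Lemma joinS r C p j : @join r C p (lift ord0 j) = p.2 j.
Proof. by rewrite ffunE liftK. Qed.

Lemma ffsum (r : nat) : forall (lam : nat -> F) C K, (K <= C)%N ->
  \sum_(al : {ffun 'I_r -> 'I_C} | (\sum_(j < r) (al j : nat) < K)%N)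
     \prod_(j < r) lam j ^+ al j = Tl (mkseq lam r) K.
Proof.
elim: r => [|r IH] lam C K hK.
  rewrite /=.
  case: K hK => [|K] hK.
    by rewrite big_pred0 // => al; rewrite big_ord0.
  rewrite (eq_bigl xpredT) => [|al]; last by rewrite big_ord0.
  rewrite (eq_bigr (fun _ => 1)) => [|al _]; last by rewrite big_ord0.
  by rewrite sumr_const card_ffun !card_ord.
rewrite (reindex (@join r C)); last by apply: onW_bij; apply: join_bij.
have -> : mkseq lam r.+1 = lam 0%N :: mkseq (fun j => lam j.+1) r.
  by rewrite /mkseq /= -[in LHS](addn0 1%N) iotaDl -map_comp.
rewrite /=.
under eq_bigl => p do rewrite big_ord_recl join0.
under eq_bigr => p _ do rewrite big_ord_recl join0.
rewrite -(pair_big_dep xpredT (fun (a : 'I_C) (b : {ffun 'I_r -> 'I_C}) => (a + \sum_(i < r) (join (a, b) (lift ord0 i) : nat) < K)%N)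
   (fun (a : 'I_C) (b : {ffun 'I_r -> 'I_C}) => lam 0%N ^+ a * \prod_(i < r) lam (lift ord0 i) ^+ join (a, b) (lift ord0 i))) /=.
have -> : \sum_(a < K) lam 0%N ^+ a * Tl (mkseq (fun j : nat => lam j.+1) r) (K - a)
   = \sum_(a < C) lam 0%N ^+ a * Tl (mkseq (fun j : nat => lam j.+1) r) (K - a).
  rewrite (big_ord_widen C (fun a => lam 0%N ^+ a * Tl (mkseq (fun j : nat => lam j.+1) r) (K - a))) //.
  rewrite [RHS](bigID (fun a : 'I_C => (a < K)%N)) /= [X in _ = _ + X]big1 ?addr0 // => a.
  by rewrite -leqNgt -subn_eq0 => /eqP ->; rewrite Tl0 mulr0.
apply: eq_bigr => a _.
rewrite -mulr_sumr -(IH (fun j => lam j.+1) C (K - a)%N); last by lia.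
congr (_ * _); apply: eq_big => [b|b _].
  by rewrite ltn_subRL; congr (_ + _ < _)%N; apply: eq_bigr => j _; rewrite joinS.
by apply: eq_bigr => j _; rewrite joinS /bump add1n.
Qed.

End FF.

End P2.
Import P2.

Lemma tofD x y : tof (x + y) = tof x + tof y. Proof. exact: rmorphD. Qed.
Lemma tofM x y : tof (x * y) = tof x * tof y. Proof. exact: rmorphM. Qed.
Lemma tofN x : tof (- x) = - tof x. Proof. exact: rmorphN. Qed.
Lemma tof1 : tof 1 = 1. Proof. exact: rmorph1. Qed.
Lemma tofX x n : tof (x ^+ n) = tof x ^+ n. Proof. exact: rmorphXn. Qed.

Lemma va_neq0 : va != 0.
Proof. by rewrite /va /tof tofrac_eq0 polyC_eq0 polyX_eq0. Qed.
Lemma vq_neq0 : vq != 0.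
Proof. by rewrite /vq /tof tofrac_eq0 polyX_eq0. Qed.

Definition DN N M := va ^+ N * vq ^+ M.
Lemma DN_neq0 N M : DN N M != 0.
Proof. by apply: mulf_neq0; apply: expf_neq0; [exact: va_neq0|exact: vq_neq0]. Qed.
Lemma DN_tof N M : DN N M = tof (('X%:P) ^+ N * 'X ^+ M).
Proof. by rewrite tofM !tofX. Qed.
Lemma DN_mul N1 M1 N2 M2 : DN N1 M1 * DN N2 M2 = DN (N1 + N2) (M1 + M2).
Proof. by rewrite /DN mulrACA -!exprD. Qed.

Lemma laurentE x : laurent x <-> exists P N M, x * DN N M = tof P.
Proof.
split => [[P [N [M ->]]]|[P [N [M h]]]].
  by exists P, N, M; rewrite divfK // DN_neq0.
by exists P, N, M; rewrite -h mulfK // DN_neq0.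
Qed.

Lemma laurent_tof P : laurent (tof P).
Proof. by apply/laurentE; exists P, 0%N, 0%N; rewrite /DN !expr0 !mulr1. Qed.

Lemma laurent_add x y : laurent x -> laurent y -> laurent (x + y).
Proof.
move=> /laurentE [P1 [N1 [M1 h1]]] /laurentE [P2 [N2 [M2 h2]]].
apply/laurentE; exists (P1 * (('X%:P) ^+ N2 * 'X ^+ M2) + P2 * (('X%:P) ^+ N1 * 'X ^+ M1)), (N1 + N2)%N, (M1 + M2)%N.
rewrite tofD (tofM P1) (tofM P2) -!DN_tof -h1 -h2 -DN_mul mulrDl; congr (_ + _); first by rewrite mulrA.
by rewrite [DN N1 M1 * _]mulrC mulrA.
Qed.

Lemma laurent_mul x y : laurent x -> laurent y -> laurent (x * y).
Proof.
move=> /laurentE [P1 [N1 [M1 h1]]] /laurentE [P2 [N2 [M2 h2]]].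
apply/laurentE; exists (P1 * P2), (N1 + N2)%N, (M1 + M2)%N.
by rewrite tofM -h1 -h2 -DN_mul mulrACA.
Qed.

Lemma laurent_opp x : laurent x -> laurent (- x).
Proof.
move=> /laurentE [P [N [M h]]]; apply/laurentE; exists (- P), N, M.
by rewrite tofN -h mulNr.
Qed.

Lemma laurent0 : laurent 0. Proof. by have := laurent_tof 0; rewrite /tof rmorph0. Qed.
Lemma laurent1 : laurent 1. Proof. by have := laurent_tof 1; rewrite tof1. Qed.
Lemma laurent_sub x y : laurent x -> laurent y -> laurent (x - y).
Proof. by move=> hx hy; apply: laurent_add => //; apply: laurent_opp. Qed.
Lemma laurent_exp x n : laurent x -> laurent (x ^+ n).
Proof. move=> hx; elim: n => [|n IH]; first by rewrite expr0; exact: laurent1. by rewrite exprS; apply: laurent_mul. Qed.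
Lemma laurent_va : laurent va. Proof. exact: laurent_tof. Qed.
Lemma laurent_vq : laurent vq. Proof. exact: laurent_tof. Qed.
Lemma laurent_vaV : laurent va^-1.
Proof.
apply/laurentE; exists 1, 1%N, 0%N.
by rewrite /DN expr1 expr0 mulr1 mulVf ?tof1 //; exact: va_neq0.
Qed.
Lemma laurent_vqV : laurent vq^-1.
Proof.
apply/laurentE; exists 1, 0%N, 1%N.
by rewrite /DN expr1 expr0 mul1r mulVf ?tof1 //; exact: vq_neq0.
Qed.
Lemma laurent_vqz (e : int) : laurent (vq ^ e).
Proof.
case: e => n /=; first exact: laurent_exp laurent_vq.
by rewrite NegzE -exprz_inv; apply: laurent_exp laurent_vqV.
Qed.

Definition RR (u x y : Frac) := laurent x /\ laurent y /\ exists c, laurent c /\ x - y = (1 - u) * c.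

Lemma RR_refl u x : laurent x -> RR u x x.
Proof. by move=> h; split; [|split] => //; exists 0; rewrite subrr mulr0; split; [exact: laurent0|]. Qed.

Lemma RR_add u x1 y1 x2 y2 : RR u x1 y1 -> RR u x2 y2 -> RR u (x1 + x2) (y1 + y2).
Proof.
move=> [a1 [b1 [c1 [hc1 e1]]]] [a2 [b2 [c2 [hc2 e2]]]].
split; [exact: laurent_add|split; [exact: laurent_add|]].
exists (c1 + c2); split; first exact: laurent_add.
by rewrite mulrDr -e1 -e2; ring.
Qed.

Lemma RR_mul u x1 y1 x2 y2 : RR u x1 y1 -> RR u x2 y2 -> RR u (x1 * x2) (y1 * y2).
Proof.
move=> [a1 [b1 [c1 [hc1 e1]]]] [a2 [b2 [c2 [hc2 e2]]]].
split; [exact: laurent_mul|split; [exact: laurent_mul|]].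
exists (c1 * x2 + y1 * c2); split.
  by apply: laurent_add; apply: laurent_mul.
have -> : x1 * x2 - y1 * y2 = (x1 - y1) * x2 + y1 * (x2 - y2) by ring.
by rewrite e1 e2; ring.
Qed.

Lemma RR_opp u x y : RR u x y -> RR u (- x) (- y).
Proof.
move=> [a [b [c [hc e]]]]; split; [exact: laurent_opp|split; [exact: laurent_opp|]].
exists (- c); split; first exact: laurent_opp.
by rewrite mulrN -e; ring.
Qed.

Lemma RR_exp u x y n : RR u x y -> RR u (x ^+ n) (y ^+ n).
Proof.
move=> h; elim: n => [|n IH]; first by rewrite !expr0; apply: RR_refl laurent1.
by rewrite !exprS; apply: RR_mul.
Qed.

Lemma RR_pk u K r (f g : 'I_r -> Frac) : (forall j, RR u (f j) (g j)) -> RR u (pk K f) (pk K g).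
Proof.
move=> h; rewrite /pk; apply: RR_mul.
  apply: (big_ind2 (RR u)); first exact: RR_refl laurent1.
    by move=> *; apply: RR_mul.
  move=> j _; apply: RR_add; first exact: RR_refl laurent1.
  by apply: RR_opp.
apply: (big_ind2 (RR u)); first exact: RR_refl laurent0.
  by move=> *; apply: RR_add.
move=> al _; apply: (big_ind2 (RR u)); first exact: RR_refl laurent1.
  by move=> *; apply: RR_mul.
by move=> j _; apply: RR_exp.
Qed.

Lemma RR_aV (s : int) : RR (va * vq ^ s) va^-1 (vq ^ s).
Proof.
split; [exact: laurent_vaV|split; [exact: laurent_vqz|]].
exists va^-1; split; first exact: laurent_vaV.
rewrite mulrBl mul1r [va * _]mulrC -mulrA mulfV ?mulr1 //; exact: va_neq0.
Qed.

Lemma RR_a (s : int) : RR (va * vq ^ s) va (vq ^ (- s)).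
Proof.
split; [exact: laurent_va|split; [exact: laurent_vqz|]].
exists (- vq ^ (- s)); split; first by apply: laurent_opp; exact: laurent_vqz.
have h : vq ^ s * vq ^ (- s) = 1 by rewrite -expfzDr ?subrr ?expr0z //; exact: vq_neq0.
rewrite mulrN mulrBl mul1r -mulrA h mulr1; ring.
Qed.

Lemma vqX_neq1 j : vq ^+ j.+1 != 1.
Proof.
rewrite /vq -tofX -tof1 /tof tofrac_eq; apply/negP => /eqP e.
by have := congr1 (fun p : {poly {poly int}} => size p) e; rewrite /= size_polyXn size_poly1.
Qed.

Lemma hz_vq j : 1 - vq ^+ j.+1 != 0.
Proof. by rewrite subr_eq0 eq_sym vqX_neq1. Qed.

Lemma hz_vqV j : 1 - vq^-1 ^+ j.+1 != 0.
Proof. by rewrite exprVn subr_eq0 eq_sym invr_eq1 vqX_neq1. Qed.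

Lemma eq_pk K r (f g : 'I_r -> Frac) : (forall j, f j = g j) -> pk K f = pk K g.
Proof.
move=> h; rewrite /pk; congr (_ * _); first by apply: eq_bigr => j _; rewrite h.
by apply: eq_bigr => al _; apply: eq_bigr => j _; rewrite h.
Qed.

Lemma pk_geo (z : Frac) N K r : pk K (fun j : 'I_r => z ^+ (N + j)) = Pl z N r * Tl (geo z N r) K.
Proof. by rewrite /pk (@ffsum _ r (fun j => z ^+ (N + j))). Qed.

Lemma pk_sym (z : Frac) (hz : forall j, 1 - z ^+ j.+1 != 0) M N r :
  pk M (fun j : 'I_r.+1 => z ^+ (N + j)) = pk N (fun j : 'I_r.+1 => z ^+ (M + j)).
Proof. by rewrite !pk_geo; exact: (ff_sym hz r M N). Qed.

Lemma pk_rev K r (g : 'I_r -> Frac) : pk K (fun j => g (rev_ord j)) = pk K g.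
Proof.
rewrite /pk; congr (_ * _).
  by rewrite [RHS](reindex_inj rev_ord_inj).
pose h (al : {ffun 'I_r -> 'I_K}) : {ffun 'I_r -> 'I_K} := [ffun j => al (rev_ord j)].
have hinj : injective h.
  move=> a b e; apply/ffunP => j; have := congr1 (fun f : {ffun 'I_r -> 'I_K} => f (rev_ord j)) e.
  by rewrite /h !ffunE rev_ordK.
rewrite [RHS](reindex_inj hinj); apply: eq_big => [al|al _].
  by rewrite /h; congr (_ < _)%N; rewrite [LHS](reindex_inj rev_ord_inj); apply: eq_bigr => j _; rewrite ffunE.
rewrite [LHS](reindex_inj rev_ord_inj); apply: eq_bigr => j _.
by rewrite /h ffunE rev_ordK.
Qed.

Lemma pk_zero K r (f : 'I_r -> Frac) j0 : f j0 = 1 -> pk K f = 0.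
Proof. by move=> h; rewrite /pk (bigD1 j0) //= h subrr !mul0r. Qed.

Definition xg (k l : nat) (m : int) : Frac :=
  if k%:Z < m then pk (absz (m - k%:Z)) (fun j : 'I_(k+l).+1 => va^-1 * vq ^ (- m - k%:Z + (j : nat)%:Z))
  else if m < - (l%:Z) then pk (absz (- m - l%:Z)) (fun j : 'I_(k+l).+1 => va * vq ^ (m - l%:Z + (j : nat)%:Z))
  else 0.

Lemma xi_xg i k l m : kI i = k%:Z -> lI i = l%:Z -> xi i m = xg k l m.
Proof.
move=> hk hl; rewrite /xi /xg /nvar hk hl.
have -> : absz (k%:Z + l%:Z + 1) = (k + l).+1 by rewrite -!PoszD addn1.
by [].
Qed.

Definition Tg (k l : nat) (m n : int) : Frac :=
  if k%:Z < m then pk (absz (m - k%:Z)) (fun j : 'I_(k+l).+1 => vq ^ (n - k%:Z + (j : nat)%:Z))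
  else if m < - (l%:Z) then pk (absz (- m - l%:Z)) (fun j : 'I_(k+l).+1 => vq ^ (- n - l%:Z + (j : nat)%:Z))
  else 0.

Lemma RR_xg k l m n : RR (va * vq ^ (m + n)) (xg k l m) (Tg k l m n).
Proof.
rewrite /xg /Tg; case: ifP => _; [|case: ifP => _].
- apply: RR_pk => j.
  have -> : vq ^ (n - k%:Z + (j : nat)%:Z) = vq ^ (m + n) * vq ^ (- m - k%:Z + (j : nat)%:Z).
    by rewrite -expfzDr; [congr (vq ^ _); lia | exact: vq_neq0].
  apply: RR_mul; first exact: RR_aV.
  by apply: RR_refl; apply: laurent_vqz.
- apply: RR_pk => j.
  have -> : vq ^ (- n - l%:Z + (j : nat)%:Z) = vq ^ (- (m + n)) * vq ^ (m - l%:Z + (j : nat)%:Z).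
    by rewrite -expfzDr; [congr (vq ^ _); lia | exact: vq_neq0].
  apply: RR_mul; first exact: RR_a.
  by apply: RR_refl; apply: laurent_vqz.
- by apply: RR_refl; exact: laurent0.
Qed.

Lemma natW (x : int) : 0 <= x -> exists M : nat, x = M%:Z.
Proof. by move=> h; exists (absz x); rewrite gez0_abs. Qed.

Lemma TAA k l m n : k%:Z < m -> k%:Z < n ->
  pk (absz (m - k%:Z)) (fun j : 'I_(k+l).+1 => vq ^ (n - k%:Z + (j : nat)%:Z)) =
  pk (absz (n - k%:Z)) (fun j : 'I_(k+l).+1 => vq ^ (m - k%:Z + (j : nat)%:Z)).
Proof.
move=> hm hn.
have [M hM] : exists M : nat, m - k%:Z = M%:Z by apply: natW; lia.
have [N hN] : exists N : nat, n - k%:Z = N%:Z by apply: natW; lia.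
rewrite hM hN /= (@eq_pk _ _ _ (fun j : 'I_(k+l).+1 => vq ^+ (N + j))) => [|j]; last by rewrite -PoszD.
rewrite [RHS](@eq_pk _ _ _ (fun j : 'I_(k+l).+1 => vq ^+ (M + j))) => [|j]; last by rewrite -PoszD.
exact: pk_sym hz_vq M N (k + l).
Qed.

Lemma TBB k l m n : m < - l%:Z -> n < - l%:Z ->
  pk (absz (- m - l%:Z)) (fun j : 'I_(k+l).+1 => vq ^ (- n - l%:Z + (j : nat)%:Z)) =
  pk (absz (- n - l%:Z)) (fun j : 'I_(k+l).+1 => vq ^ (- m - l%:Z + (j : nat)%:Z)).
Proof.
move=> hm hn.
have [M hM] : exists M : nat, - m - l%:Z = M%:Z by apply: natW; lia.
have [N hN] : exists N : nat, - n - l%:Z = N%:Z by apply: natW; lia.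
rewrite hM hN /= (@eq_pk _ _ _ (fun j : 'I_(k+l).+1 => vq ^+ (N + j))) => [|j]; last by rewrite -PoszD.
rewrite [RHS](@eq_pk _ _ _ (fun j : 'I_(k+l).+1 => vq ^+ (M + j))) => [|j]; last by rewrite -PoszD.
exact: pk_sym hz_vq M N (k + l).
Qed.

Lemma TAB k l m n : k%:Z < m -> n < - l%:Z ->
  pk (absz (m - k%:Z)) (fun j : 'I_(k+l).+1 => vq ^ (n - k%:Z + (j : nat)%:Z)) =
  pk (absz (- n - l%:Z)) (fun j : 'I_(k+l).+1 => vq ^ (- m - l%:Z + (j : nat)%:Z)).
Proof.
move=> hm hn.
have [M hM] : exists M : nat, m - k%:Z = M%:Z by apply: natW; lia.
have [N hN] : exists N : nat, - n - l%:Z = N%:Z by apply: natW; lia.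
rewrite hM hN /=.
rewrite (@eq_pk _ _ _ (fun j : 'I_(k+l).+1 => (fun j' : 'I_(k+l).+1 => vq^-1 ^+ (N + j')) (rev_ord j))) => [|j]; last first.
  rewrite /= -[vq^-1 ^+ _]/(vq^-1 ^ ((N + ((k + l).+1 - j.+1))%N)%:Z) exprz_inv.
  by congr (vq ^ _); have := ltn_ord j; lia.
rewrite [RHS](@eq_pk _ _ _ (fun j : 'I_(k+l).+1 => (fun j' : 'I_(k+l).+1 => vq^-1 ^+ (M + j')) (rev_ord j))) => [|j]; last first.
  rewrite /= -[vq^-1 ^+ _]/(vq^-1 ^ ((M + ((k + l).+1 - j.+1))%N)%:Z) exprz_inv.
  by congr (vq ^ _); have := ltn_ord j; lia.
rewrite (@pk_rev _ _ (fun j' : 'I_(k+l).+1 => vq^-1 ^+ (N + j'))).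
rewrite (@pk_rev _ _ (fun j' : 'I_(k+l).+1 => vq^-1 ^+ (M + j'))).
exact: pk_sym hz_vqV M N (k + l).
Qed.

Lemma TAZ k l m n : - l%:Z <= n -> n <= k%:Z ->
  pk (absz (m - k%:Z)) (fun j : 'I_(k+l).+1 => vq ^ (n - k%:Z + (j : nat)%:Z)) = 0.
Proof.
move=> h1 h2.
have [J hJ] : exists J : nat, k%:Z - n = J%:Z by apply: natW; lia.
have hJr : (J < (k + l).+1)%N by lia.
apply: (@pk_zero _ _ _ (Ordinal hJr)) => /=.
have -> : n - k%:Z + J%:Z = 0 by lia.
by rewrite expr0z.
Qed.

Lemma TBZ k l m n : - l%:Z <= n -> n <= k%:Z ->
  pk (absz (- m - l%:Z)) (fun j : 'I_(k+l).+1 => vq ^ (- n - l%:Z + (j : nat)%:Z)) = 0.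
Proof.
move=> h1 h2.
have [J hJ] : exists J : nat, n + l%:Z = J%:Z by apply: natW; lia.
have hJr : (J < (k + l).+1)%N by lia.
apply: (@pk_zero _ _ _ (Ordinal hJr)) => /=.
have -> : - n - l%:Z + J%:Z = 0 by lia.
by rewrite expr0z.
Qed.

Lemma Tsym k l m n : Tg k l m n = Tg k l n m.
Proof.
rewrite /Tg.
case hA : (k%:Z < m); case hB : (m < - l%:Z); case hA' : (k%:Z < n); case hB' : (n < - l%:Z) => //=;
  try (exfalso; lia).
- exact: TAA.
- exact: TAB.
- rewrite TAZ //; lia.
- symmetry; exact: TAB.
- exact: TBB.
- rewrite TBZ //; lia.
- rewrite TAZ //; lia.
- rewrite TBZ //; lia.
Qed.

Theorem mainTheorem9 (i : int) (hi : i != 0) (m n : int) (hmn : m != n) :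
  exists c : Frac, laurent c /\ xi i m - xi i n = (1 - va * vq ^ (m + n)) * c.
Proof.
have [k hk] : exists k : nat, kI i = k%:Z.
  by apply: natW; rewrite /kI; case: ifP => h; lia.
have [l hl] : exists l : nat, lI i = l%:Z.
  apply: natW; rewrite /lI; have : `|i| > 0 by rewrite normr_gt0.
  lia.
rewrite !(xi_xg _ _ _ _ hk hl).
have [_ [_ [c1 [hc1 e1]]]] := RR_xg k l m n.
have [_ [_ [c2 [hc2 e2]]]] := RR_xg k l n m.
rewrite [n + m]addrC -Tsym in e2.
exists (c1 - c2); split; first exact: laurent_sub.
have -> : xg k l m - xg k l n = (xg k l m - Tg k l m n) - (xg k l n - Tg k l m n) by ring.
by rewrite e1 e2 mulrBr.
Qed.
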